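(* Let $\xi=e^{2\pi i/3}$. For all integers $k\ge2$ and $i\in\{0,1,2,3\}$, $$[t^{2k-i}]\frac{(1-t)^{k-2}(1-\xi t)^{k-1}}{1-\xi^2t}=3^{k-2}(\xi-1)\xi^{k+i-1}\quad\text{and}\quad [t^{2k-i}]\frac{(1-t)^{k-2}(1-\xi^2 t)^{k-1}}{1-\xi t}=3^{k-2}(1-\xi)\xi^{2k-i}.$$
   Context: $[t^m]F(t)$ denotes the coefficient of $t^m$ in the formal power series $F(t)$. *)

(* Defs.v *)
From mathcomp Require Import all_boot all_order all_algebra all_field.
Set Implicit Arguments. Unset Strict Implicit. Unset Printing Implicit Defensive.
Import Order.TTheory GRing.Theory Num.Theory.
Local Open Scope ring_scope.

(* xi = e^{2 pi i/3} = -1/2 + i sqrt(3)/2 *)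
Definition xi : algC := (-1 + 'i * sqrtC 3) / 2.

(* [t^m] ( p(t) / (1 - a t) ) for a polynomial p: since
   1/(1 - a t) = \sum_n a^n t^n, only the terms n <= m contribute to t^m. *)
Definition coef_div_lin (p : {poly algC}) (a : algC) (m : nat) : algC :=
  (p * \sum_(n < m.+1) (a *: 'X) ^+ n)`_m.

(* Main.v *)
Require Import Defs.
From mathcomp Require Import all_boot all_order all_algebra all_field.
From mathcomp Require Import ring zify.
Import Order.TTheory GRing.Theory Num.Theory.
Local Open Scope ring_scope.

Lemma cdl (p : {poly algC}) a b m : a * b = 1 -> (size p <= m.+1)%N ->
  coef_div_lin p a m = a ^+ m * p.[b].
Proof.
move=> ab sp; rewrite /coef_div_lin mulr_sumr coef_sum (horner_coef_wide b sp) mulr_sumr.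
rewrite (reindex_inj rev_ord_inj) /=; apply: eq_bigr => j _.
have jm : (j <= m)%N by rewrite -ltnS.
rewrite exprZn -scalerAr coefZ coefMXn /= subSS ltnNge leq_subr /= subKn //.
have e : (a ^+ m = a ^+ (m - j) * a ^+ j) by rewrite -exprD subnK.
rewrite e -mulrA; congr (_ * _); rewrite mulrCA -exprMn ab expr1n mulr1.
done.
Qed.

Lemma xi_sum : 1 + xi + xi ^+ 2 = 0.
Proof.
have hs : sqrtC 3 ^+ 2 = 3 :> algC by rewrite sqrtCK.
have hi : 'i ^+ 2 = -1 :> algC by rewrite sqrCi.
have -> : 1 + xi + xi ^+ 2 = (('i * sqrtC 3) ^+ 2 + 3) / 4.
  by rewrite /xi; field.
by rewrite exprMn hs hi mulN1r addNr mul0r.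
Qed.

Lemma xi3 : xi ^+ 3 = 1.
Proof.
apply/eqP; rewrite -subr_eq0.
have -> : xi ^+ 3 - 1 = (xi - 1) * (1 + xi + xi ^+ 2) by ring.
by rewrite xi_sum mulr0.
Qed.

Lemma xi_mod a b : (a = b %[mod 3])%N -> xi ^+ a = xi ^+ b.
Proof.
move=> h; rewrite (divn_eq a 3) (divn_eq b 3) h !exprD !(mulnC _ 3) !exprM xi3 !expr1n.
by rewrite !mul1r.
Qed.

Lemma size_lin (a : algC) : (size (1 - a *: 'X)%R <= 2)%N.
Proof.
apply: leq_trans (size_polyD _ _) _; rewrite size_poly1 size_polyN geq_max /=.
by apply: leq_trans (size_scale_leq _ _) _; rewrite size_polyX.
Qed.

Lemma size_pr (a : algC) n l : (size ((1 - 'X) ^+ n * (1 - a *: 'X) ^+ l)%R <= (n + l).+1)%N.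
Proof.
apply: leq_trans (size_polyMleq _ _) _.
have h : forall c : algC, forall e, (size ((1 - c *: 'X) ^+ e)%R <= e.+1)%N.
  move=> c e; apply: leq_trans (size_poly_exp_leq _ _) _.
  have := size_lin c; case: (size _) => [|[|[|s]]] //= _; rewrite ?mul0n ?mul1n //.
have h1 := h 1 n; rewrite scale1r in h1; have h2 := h a l.
move: h1 h2; set s1 := size _; set s2 := size _; lia.
Qed.

Lemma hev (c x : algC) n l :
  ((1 - 'X) ^+ n * (1 - c *: 'X) ^+ l).[x] = (1 - x) ^+ n * (1 - c * x) ^+ l.
Proof. by rewrite !hornerE. Qed.

Lemma h3 : (1 - xi) * (1 - xi ^+ 2) = 3%:R.
Proof.
have -> : (1 - xi) * (1 - xi ^+ 2) = 3%:R - (1 + xi + xi ^+ 2) + (xi ^+ 3 - 1) by ring.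
by rewrite xi_sum xi3 subrr subr0 addr0.
Qed.

Theorem lemma8 (k i : nat) (hk : (2 <= k)%N) (hi : (i <= 3)%N) :
  coef_div_lin ((1 - 'X) ^+ (k - 2) * (1 - xi *: 'X) ^+ (k - 1)) (xi ^+ 2)
      (2 * k - i)%N
    = 3%:R ^+ (k - 2) * (xi - 1) * xi ^+ (k + i - 1)
  /\
  coef_div_lin ((1 - 'X) ^+ (k - 2) * (1 - xi ^+ 2 *: 'X) ^+ (k - 1)) xi
      (2 * k - i)%N
    = 3%:R ^+ (k - 2) * (1 - xi) * xi ^+ (2 * k - i).
Proof.
case: k hk => [|[|n]] // _.
have -> : (n.+2 - 2 = n)%N by lia.
have -> : (n.+2 - 1 = n.+1)%N by lia.
set m := (2 * n.+2 - i)%N.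
have sz : forall a : algC, (size ((1 - 'X) ^+ n * (1 - a *: 'X) ^+ n.+1)%R <= m.+1)%N.
  move=> a; apply: leq_trans (size_pr a n n.+1) _; rewrite /m; lia.
split.
- rewrite (@cdl _ _ xi _ _ (sz _)); last by rewrite -exprSr xi3.
  have F : (1 - xi) ^+ n * (1 - xi * xi) ^+ n.+1 = 3%:R ^+ n * (1 - xi ^+ 2).
    by rewrite exprSr mulrA -exprMn -expr2 h3.
  rewrite hev F.
  have E : xi ^+ (2 * m) = xi ^+ (n.+2 + i - 1).+1.
    apply: xi_mod; rewrite /m; lia.
  have e1 : xi - 1 = (1 - xi ^+ 2) * xi.
    by rewrite mulrBl mul1r -exprSr xi3.
  rewrite -exprM E e1 exprS; ring.
- rewrite (@cdl _ _ (xi ^+ 2) _ _ (sz _)); last by rewrite -exprS xi3.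
  have E : xi ^+ 2 * xi ^+ 2 = xi by rewrite -exprD (@xi_mod 4 1 erefl).
  have F : (1 - xi ^+ 2) ^+ n * (1 - xi) ^+ n.+1 = 3%:R ^+ n * (1 - xi).
    by rewrite (exprSr (1 - xi)) mulrA -exprMn (mulrC (1 - xi ^+ 2)) h3.
  rewrite hev E F; ring.
Qed.
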